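(* For every Borel measure $\mu$ on $\mathbb R$ (with its usual topology), the restriction of $\mu$ to the open subsets of the Sorgenfrey line $\mathbb R_\ell$ is a continuous valuation.
   Context: The Sorgenfrey line $\mathbb R_\ell$ is $\mathbb R$ with the topology generated by the half-open intervals $[a,b[$, $a<b$; its open sets are Borel subsets of $\mathbb R$. A continuous valuation on a space $X$ is a map $\nu:\mathcal OX\to[0,\infty]$ with $\nu(\emptyset)=0$, monotone, modular, and preserving suprema of directed families of open sets. *)

(* Defs.v *)
From mathcomp Require Import all_boot all_order all_algebra.
From mathcomp Require Import all_classical all_reals all_analysis.
Set Implicit Arguments. Unset Strict Implicit. Unset Printing Implicit Defensive.
Import Order.TTheory GRing.Theory Num.Theory.
Local Open Scope classical_set_scope.
Local Open Scope ring_scope.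

Definition sorgenfrey_open {R : realType} (A : set R) : Prop :=
  forall x, A x -> exists a b : R, a < b /\ `[a, b[%classic x /\ `[a, b[%classic `<=` A.

Definition directed_family {T : Type} (D : set (set T)) : Prop :=
  D !=set0 /\ forall U V, D U -> D V -> exists2 W, D W & U `|` V `<=` W.

Definition continuous_valuation {T : Type} {R : realType}
    (O : set (set T)) (nu : set T -> \bar R) : Prop :=
  [/\ (forall U, O U -> (0 <= nu U)%E),
      nu set0 = 0%E,
      (forall U V, O U -> O V -> U `<=` V -> (nu U <= nu V)%E),
      (forall U V, O U -> O V -> (nu (U `|` V) + nu (U `&` V) = nu U + nu V)%E) &
      (forall D : set (set T), D `<=` O -> directed_family D ->
         nu (\bigcup_(U in D) U) = ereal_sup [set nu U | U in D])].

(* Main.v *)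
Require Import Defs.
From mathcomp Require Import all_boot all_order all_algebra.
From mathcomp Require Import all_classical all_reals all_analysis.
Set Implicit Arguments. Unset Strict Implicit. Unset Printing Implicit Defensive.
Import Order.TTheory GRing.Theory Num.Theory.
Local Open Scope classical_set_scope.
Local Open Scope ring_scope.

Section S.
Variable R : realType.

Definition Ein (D : set (set R)) (r y : R) (U : set R) :=
  D U /\ y < r /\ `[y, r[%classic `<=` U.

Definition Pi (D : set (set R)) (i : ((rat * rat) + rat)%type) (U : set R) : Prop :=
  match i with
  | inl (q, r) => Ein D (ratr r) (ratr q) U
  | inr r => exists x, Ein D (ratr r) x U /\
      (forall y U', Ein D (ratr r) y U' -> x <= y)
  end.

Lemma Pi_D D i U : Pi D i U -> D U.
Proof. by case: i => [[q r]|r] /= => [[]|[x [[]]]]. Qed.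

Lemma sorg_cover (D : set (set R)) U0 : D U0 ->
  (forall x, (\bigcup_(U in D) U) x -> exists U b, D U /\ x < b /\ `[x, b[%classic `<=` U) ->
  exists f : nat -> set R, (forall n, D (f n)) /\ \bigcup_(U in D) U = \bigcup_n f n.
Proof.
move=> DU0 HD.
have /choice [g Hg] : forall i : ((rat * rat) + rat)%type, exists V,
    D V /\ ((exists U, Pi D i U) -> Pi D i V).
  move=> i.
  case: (pselect (exists U, Pi D i U)) => [[U PU]|nP].
    by exists U; split; [exact: Pi_D PU|].
  by exists U0; split.
pose f n := match unpickle n with Some i => g i | None => U0 end.
have gf (i : ((rat * rat) + rat)%type) : g i `<=` \bigcup_n f n.
  move=> x gx; exists (pickle i); first by [].
  by rewrite /f pickleK.
exists f; split.
  by move=> n; rewrite /f; case: (unpickle n) => // i; case: (Hg i).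
apply/seteqP; split; last first.
  by move=> x [n _ fnx]; exists (f n) => //; rewrite /f; case: (unpickle n) => // i; case: (Hg i).
move=> x Dx; have [U [b [DU [xb xbU]]]] := HD x Dx.
have [r] := rat_in_itvoo xb; rewrite in_itv /= => /andP[xr rb].
have Ex : Ein D (ratr r) x U.
  split; [by []|split; [by []|]] => y; rewrite /= !in_itv /= => /andP[xy yr].
  by apply: xbU; rewrite /= in_itv /= xy (lt_trans yr rb).
case: (pselect (exists y U', Ein D (ratr r) y U' /\ y < x)) => [[y [U' [Ey yx]]]|nE].
  have [q] := rat_in_itvoo yx; rewrite in_itv /= => /andP[yq qx].
  have Pq : Pi D (inl (q, r)) U'.
    case: Ey => DU' [yr yU']; split; [by []|split; first exact: lt_trans qx xr].
    move=> z; rewrite /= !in_itv /= => /andP[qz zr]; apply: yU'.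
    by rewrite /= in_itv /= zr (le_trans (ltW yq) qz).
  have [_ /(_ (ex_intro _ U' Pq)) [_ [_ H]]] := Hg (inl (q, r)).
  apply: (gf (inl (q, r))); apply: H.
  by rewrite /= in_itv /= xr (ltW qx).
have Pr : Pi D (inr r) U.
  exists x; split => // y U' Ey; rewrite leNgt; apply/negP => yx.
  by apply: nE; exists y, U'.
have [_ /(_ (ex_intro _ U Pr)) [x' [Ex' minx']]] := Hg (inr r).
have x'x : x' <= x := minx' x U Ex.
have xx' : x <= x'.
  rewrite leNgt; apply/negP => lt.
  by apply: nE; exists x', (g (inr r)).
have e : x' = x by apply/eqP; rewrite eq_le x'x xx'.
rewrite e in Ex'.
case: Ex' => _ [_ H].
apply: (gf (inr r)); apply: H.
by rewrite /= in_itv /= lexx xr.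
Qed.

Lemma sorg_hd (D : set (set R)) : D `<=` sorgenfrey_open ->
  forall x, (\bigcup_(U in D) U) x -> exists U b, D U /\ x < b /\ `[x, b[%classic `<=` U.
Proof.
move=> DO x [U DU Ux]; have [a [b [ab [xab abU]]]] := DO U DU x Ux.
exists U, b; split => //; move: xab; rewrite /= in_itv /= => /andP[ax xb].
split => // y; rewrite /= !in_itv /= => /andP[xy yb]; apply: abU.
by rewrite /= in_itv /= yb (le_trans ax xy).
Qed.

Lemma sorg_meas (U : set R) : sorgenfrey_open U -> measurable U.
Proof.
move=> oU; case: (pselect (U !=set0)) => [[x0 Ux0]|nU]; last first.
  suff -> : U = set0 by exact: measurable0.
  by apply/seteqP; split => x // Ux; apply: nU; exists x.
pose D := [set V : set R | exists a b, a < b /\ V = `[a, b[%classic /\ V `<=` U].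
have [a0 [b0 [ab0 [_ abU0]]]] := oU x0 Ux0.
have DO : D `<=` sorgenfrey_open.
  by move=> V [a [b [ab [-> _]]]] x xab; exists a, b; split => //; split.
have DU0 : D `[a0, b0[%classic by exists a0, b0.
have [f [Df E]] := sorg_cover DU0 (sorg_hd DO).
have -> : U = \bigcup_(V in D) V.
  apply/seteqP; split; last by move=> x [V [a [b [_ [_ VU]]]]] /VU.
  move=> x Ux; have [a [b [ab [xab abU]]]] := oU x Ux.
  by exists `[a, b[%classic => //; exists a, b.
rewrite E; apply: bigcupT_measurable => n.
by have [a [b [_ [-> _]]]] := Df n; exact: measurable_itv.
Qed.

End S.

Theorem proposition4p7 (R : realType) (mu : {measure set R -> \bar R}) :
  continuous_valuation (@sorgenfrey_open R) mu.
Proof.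
split.
- by move=> U _; exact: measure_ge0.
- exact: measure0.
- move=> U V oU oV UV; apply: le_measure => //; rewrite inE; exact: sorg_meas.
- move=> U V oU oV.
  have mU := sorg_meas oU; have mV := sorg_meas oV.
  have E1 : U `|` V = U `|` (V `\` U).
    apply/seteqP; split => x /=; last by case=> [|[]]; [left|right].
    by case: (pselect (U x)) => Ux; [left|case=> // Vx; right].
  have E2 : V = (U `&` V) `|` (V `\` U).
    apply/seteqP; split => x /=; last by case=> [[]|[]].
    by case: (pselect (U x)) => Ux Vx; [left|right].
  have -> : mu (U `|` V) = (mu U + mu (V `\` U))%E.
    rewrite E1 measureU //; first exact: measurableD.
    by apply/seteqP; split => x // [? []].
  have -> : mu V = (mu (U `&` V) + mu (V `\` U))%E.
    rewrite {1}E2 measureU //; [exact: measurableI|exact: measurableD|].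
    by apply/seteqP; split => x // [[? ?] []].
  by rewrite -addeA [(mu (V `\` U) + _)%E]addeC addeA.
- move=> D DO [[U0 DU0] dir].
  have [f [Df E]] := sorg_cover DU0 (sorg_hd DO).
  have /choice [nx Hnx] : forall p : set R * nat, exists W,
      D p.1 -> D W /\ p.1 `|` f p.2 `<=` W.
    case=> A n; case: (pselect (D A)) => [DA|nDA]; last by exists U0.
    by have [W DW sub] := dir A (f n) DA (Df n); exists W.
  pose W := fix W n := if n is m.+1 then nx (W m, m.+1) else f 0%N.
  have DW n : D (W n) by elim: n => [|n IH] //=; case: (Hnx (W n, n.+1) IH).
  have fW n : f n `<=` W n.
    case: n => [|n] //=; case: (Hnx (W n, n.+1) (DW n)) => _ /= H x fx.
    by apply: H; right.
  have ndW : nondecreasing_seq W.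
    apply/nondecreasing_seqP => n; rewrite subsetEset /=.
    by case: (Hnx (W n, n.+1) (DW n)) => _ /= H x Wx; apply: H; left.
  have UE : \bigcup_(U in D) U = \bigcup_n W n.
    apply/seteqP; split; last by move=> x [n _ Wx]; exists (W n).
    by rewrite E => x [n _ fx]; exists n => //; apply: fW.
  have mW n : measurable (W n) := sorg_meas (DO _ (DW n)).
  have mB : measurable (\bigcup_n W n) by apply: bigcupT_measurable.
  rewrite UE; apply/eqP; rewrite eq_le; apply/andP; split.
    have h1 := nondecreasing_cvg_mu (mu := mu) mW mB ndW.
    have ndm : nondecreasing_seq (mu \o W).
      apply/nondecreasing_seqP => n; apply: le_measure; rewrite ?inE //.
      by move/nondecreasing_seqP : ndW => /(_ n); rewrite subsetEset.
    have h2 := ereal_nondecreasing_cvgn ndm.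
    rewrite (cvg_unique _ h1 h2); last exact: ereal_hausdorff.

    apply: ge_ereal_sup => y [n _ <-].
    by apply: ereal_sup_ubound; exists (W n).
  apply: ge_ereal_sup => y [V DV <-]; apply: le_measure; rewrite ?inE //.
    exact: sorg_meas (DO _ DV).
  by rewrite -UE => x Vx; exists V.
Qed.
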